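(* Let $m\ge1$ and $n\in\mathbb{Z}$. Suppose the boxes $b_0,\ldots,b_{m-1}$ are independent integer variables, each $b_i$ ranging over the whole integer interval $\{u_i,\ldots,v_i\}$, with $\sum_i u_i\le n\le\sum_i v_i$. Then there is no integer sequence $T=(t_0,\ldots,t_{m-1})$ with $\sum_i t_i<n-m+1$ such that for every admissible $B$ with $\sum_i b_i\le n$ and every $l\in\{1,\ldots,m\}$ there exists $i$ with $\sum_{j=i}^{i+l'-1}b_j\le l'-1+\sum_{j=i}^{i+l'-1}t_j$ for all $l'\in\{1,\ldots,l\}$.
   Context: Indices are taken modulo $m$ (ring arrangement). *)

(* Defs.v *)
From mathcomp Require Import all_boot all_order all_algebra.
Set Implicit Arguments. Unset Strict Implicit. Unset Printing Implicit Defensive.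
Import Order.TTheory GRing.Theory Num.Theory.
Local Open Scope ring_scope.

Definition cyc_sum (m : nat) (b : nat -> int) (i l : nat) : int :=
  \sum_(j < l) b ((i + j) %% m)%N.

(* Main.v *)
Require Import Defs.
From mathcomp Require Import all_boot all_order all_algebra.
From mathcomp Require Import zify.
Import Order.TTheory GRing.Theory Num.Theory.
Local Open Scope ring_scope.

Lemma rot (m' i : nat) (b : nat -> int) : (i < m'.+1)%N ->
  \sum_(j < m'.+1) b ((i + j) %% m'.+1)%N = \sum_(j < m'.+1) b j.
Proof.
move=> lt.
rewrite [RHS](reindex_inj (addrI (Ordinal lt))) /=.
by apply: eq_bigr => j _.
Qed.

Lemma exb (u v : nat -> int) (m : nat) : forall n : int,
  (forall i, (i < m)%N -> u i <= v i) ->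
  \sum_(i < m) u i <= n <= \sum_(i < m) v i ->
  exists b : nat -> int, (forall i, (i < m)%N -> u i <= b i <= v i) /\
     \sum_(i < m) b i = n.
Proof.
elim: m => [|m IH] n huv.
  rewrite !big_ord0 => /andP [h1 h2]; exists (fun _ => 0); split => //.
  by rewrite big_ord0; lia.
have e : forall f : nat -> int, \sum_(i < m.+1) f i = \sum_(i < m) f i + f m.
  by move=> f; rewrite big_ord_recr.
rewrite !e => /andP [h1 h2].
have hm := huv m (ltnSn m).
have huv' : forall i, (i < m)%N -> u i <= v i by move=> i hi; apply: huv; lia.
have hsu : \sum_(i < m) u i <= \sum_(i < m) v i.
  by apply: ler_sum => i _; apply: huv'.
have [bm [hbm1 hbm2 hbm3 hbm4]] : exists bm : int,
    [/\ u m <= bm, bm <= v m, \sum_(i < m) u i <= n - bm & n - bm <= \sum_(i < m) v i].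
  have [hc|hc] := leP (n - \sum_(i < m) v i) (u m).
    by exists (u m); split; lia.
  by exists (n - \sum_(i < m) v i); split; lia.
have [b [hb hs]] : exists b : nat -> int, (forall i, (i < m)%N -> u i <= b i <= v i) /\
     \sum_(i < m) b i = n - bm.
  by apply: IH => //; apply/andP; split.
exists (fun i => if i == m then bm else b i); split.
  move=> i hi; case: eqP => [->|ne].
    by apply/andP; split.
  by apply: hb; lia.
rewrite (e (fun i => if i == m then bm else b i)) eqxx.
rewrite (eq_bigr (fun i : 'I_m => b i)); first by rewrite hs; lia.
by move=> i _; have := ltn_ord i; case: eqP => // ->; rewrite ltnn.
Qed.

Theorem mainTheorem8 (m : nat) (n : int) (u v : nat -> int) :
  (0 < m)%N ->
  (forall i, (i < m)%N -> u i <= v i) ->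
  \sum_(i < m) u i <= n <= \sum_(i < m) v i ->
  ~ (exists t : nat -> int,
       \sum_(i < m) t i < n - (m%:Z) + 1 /\
       forall b : nat -> int,
         (forall i, (i < m)%N -> u i <= b i <= v i) ->
         \sum_(i < m) b i <= n ->
         forall l : nat, (1 <= l <= m)%N ->
           exists i : nat, (i < m)%N /\
             forall l' : nat, (1 <= l' <= l)%N ->
               cyc_sum m b i l' <= (l'%:Z - 1) + cyc_sum m t i l').
Proof.
move=> hm huv hn [t [ht H]].
have [b [hb hs]] := exb u v m n huv hn.
have hl : (1 <= m <= m)%N by rewrite leqnn andbT.
have hle : \sum_(i < m) b i <= n by rewrite hs.
have [i [hi Hi]] := H b hb hle m hl.
have := Hi m hl; clear H Hi.
rewrite /cyc_sum.
case: m hm huv hn ht hb hs hl hi hle => // m' _ _ _ ht _ hs _ hi _.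
rewrite !rot // hs.
lia.
Qed.
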